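(* Let $G$ be an additive group and let $X$ and $\preceq$ be as described below. Then $(X,\preceq)$ is an upper-semilinear $\vee$-semilattice.
   Context: A function $f$ defined on an interval $(\alpha,\beta)$ is piecewise constant from the left if for every $x\in(\alpha,\beta)$ there is $\varepsilon>0$ with $f$ constant on $[x-\varepsilon,x]$. $X$ is the set of pairs $(f,a_f)$ where $a_f>0$ is a real number and $f:(a_f,+\infty)\to G$ is piecewise constant from the left with $f|_{(b_f,+\infty)}\equiv 0$ for some $b_f\ge a_f$. The partial order is: $(f,a_f)\preceq(g,a_g)$ iff $a_f\le a_g$ and $f|_{(a_g,+\infty)}=g$. A $\vee$-semilattice is a poset in which any two elements have a supremum; it is upper-semilinear if every upper cone $\{y: x\preceq y\}$ is linearly ordered. *)

(* Defs.v *)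
From Stdlib Require Import Reals.
From mathcomp Require Import all_boot all_algebra.

Set Implicit Arguments.
Unset Strict Implicit.
Open Scope R_scope.

(* An element (f, a_f) of X is represented by a pair p = (a, f) with a : R and
   f : R -> G a total function of which only the values on (a, +oo) matter. *)
Definition elt (G : zmodType) : Type := (R * (R -> G))%type.

Definition pw_const_left (G : zmodType) (a : R) (f : R -> G) : Prop :=
  forall x, a < x -> exists eps, 0 < eps /\
    forall y, a < y -> x - eps <= y <= x -> f y = f x.

Definition inX (G : zmodType) (p : elt G) : Prop :=
  0 < fst p /\ @pw_const_left G (fst p) (snd p) /\
  exists b, fst p <= b /\ forall x, b < x -> snd p x = (0 : G)%R.

Definition eqX (G : zmodType) (p q : elt G) : Prop :=
  fst p = fst q /\ forall x, fst p < x -> snd p x = snd q x.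

Definition leX (G : zmodType) (p q : elt G) : Prop :=
  fst p <= fst q /\ forall x, fst q < x -> snd p x = snd q x.

Definition is_supX (G : zmodType) (p q s : elt G) : Prop :=
  inX s /\ leX p s /\ leX q s /\
  forall u, inX u -> leX p u -> leX q u -> leX s u.

Definition upper_semilinear_join_semilattice (G : zmodType) : Prop :=
  (forall p : elt G, inX p -> leX p p) /\
  (forall p q r : elt G, inX p -> inX q -> inX r -> leX p q -> leX q r -> leX p r) /\
  (forall p q : elt G, inX p -> inX q -> leX p q -> leX q p -> eqX p q) /\
  (forall p q : elt G, inX p -> inX q -> exists s, is_supX p q s) /\
  (forall x y z : elt G, inX x -> inX y -> inX z -> leX x y -> leX x z ->
     leX y z \/ leX z y).

(* Main.v *)
Require Import Defs.
From Stdlib Require Import Reals.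
From mathcomp Require Import all_boot all_algebra.
From Stdlib Require Import Lra Classical.
Local Open Scope R_scope.

Lemma sup_ex (G : zmodType) (p q : elt G) : inX p -> inX q -> exists s, is_supX p q s.
Proof.
destruct p as [ap fp], q as [aq fq].
intros [Hp0 [Hpw [bp [Hbp Hzp]]]] [Hq0 [Hqw [bq [Hbq Hzq]]]]; simpl in *.
set m := Rmax ap aq.
set T := fun t => t = m \/ (m <= t /\ fp t <> fq t).
assert (HB : bound T).
{ exists (Rmax m (Rmax bp bq)). intros t [Ht|[Ht1 Ht2]].
  - subst t; apply Rmax_l.
  - destruct (Rle_dec t (Rmax m (Rmax bp bq))) as [h|h]; [exact h|].
    exfalso; apply Ht2. apply Rnot_le_lt in h.
    assert (bp < t) by (eapply Rle_lt_trans; [|exact h];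
      eapply Rle_trans; [apply Rmax_l|apply Rmax_r]).
    assert (bq < t) by (eapply Rle_lt_trans; [|exact h];
      eapply Rle_trans; [apply Rmax_r|apply Rmax_r]).
    rewrite (Hzp t) // (Hzq t) //. }
destruct (completeness T HB (ex_intro T m (or_introl (erefl m)))) as [c [Hub Hlub]].
assert (Hmc : m <= c) by (apply Hub; left; reflexivity).
assert (Hapm : ap <= m) by apply Rmax_l.
assert (Haqm : aq <= m) by apply Rmax_r.
assert (Heq : forall x, c < x -> fp x = fq x).
{ intros x Hx. destruct (classic (fp x = fq x)) as [h|h]; [exact h|].
  exfalso. assert (x <= c) by (apply Hub; right; split; [lra|exact h]). lra. }
exists (c, fp). split; [|split; [|split]].
- split; simpl; [lra|split].
  + intros x Hx. destruct (Hpw x ltac:(lra)) as [eps [He Hy]].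
    exists eps; split; [exact He|]. intros y Hy1 Hy2. apply Hy; [lra|exact Hy2].
  + exists (Rmax c bp). split; [apply Rmax_l|]. intros x Hx. apply Hzp.
    eapply Rle_lt_trans; [apply Rmax_r|exact Hx].
- split; simpl; [lra|]. intros; reflexivity.
- split; simpl; [lra|]. intros x Hx; symmetry; apply Heq; exact Hx.
- intros [au fu] _ [Hpu1 Hpu2] [Hqu1 Hqu2]; simpl in *.
  assert (Hc : c <= au).
  { apply Hlub. intros t [Ht|[Ht1 Ht2]].
    - subst t. apply Rmax_lub; assumption.
    - destruct (Rle_dec t au) as [h|h]; [exact h|]. exfalso; apply Ht2.
      apply Rnot_le_lt in h. rewrite Hpu2 // Hqu2 //. }
  split; simpl; [exact Hc|]. intros x Hx. apply Hpu2; exact Hx.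
Qed.

Theorem lemma4 (G : zmodType) : upper_semilinear_join_semilattice G.
Proof.
split; [|split; [|split; [|split]]].
- intros p _. split; [apply Rle_refl|reflexivity].
- intros p q r _ _ _ [h1 h2] [k1 k2]. split; [lra|].
  intros x Hx. rewrite h2; [apply k2; exact Hx|lra].
- intros p q _ _ [h1 h2] [k1 k2]. split; [lra|]. intros x Hx. apply h2. lra.
- intros p q Hp Hq. apply sup_ex; assumption.
- intros x y z _ _ _ [h1 h2] [k1 k2].
  destruct (Rle_dec (fst y) (fst z)) as [h|h].
  + left. split; [exact h|]. intros t Ht. rewrite -h2; [apply k2; exact Ht|lra].
  + right. split; [lra|]. intros t Ht. rewrite -k2; [apply h2; exact Ht|lra].
Qed.
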